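(* Let $b\in\mathbb{C}$, let $M=\{r_1<|z|<r_2\}\subset\mathbb{C}-\{0\}$ with $0\le r_1<r_2\le+\infty$, and let $X=\Re\int\Phi:M\to\mathbb{R}^3$ where $\Phi_1=(1-\frac{b}{z^2})dz$, $\Phi_2=\imath(1+\frac{b}{z^2})dz$, $\Phi_3=\frac{dz}{z}$. Then $X$ is a complete immersion if and only if $M=\mathbb{C}-\{0\}$ and $b\notin(-\infty,0)\subset\mathbb{R}$.
   Context: $X$ is a well-defined harmonic map (its coordinates are harmonic). Complete immersion: $X$ is an immersion and the induced metric $X^*\langle,\rangle$ is complete. *)

(* Defs.v *)
From Stdlib Require Import Reals.
From Coquelicot Require Import Coquelicot.
Open Scope R_scope.

Definition annulus (r1 : R) (r2 : Rbar) (z : C) : Prop :=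
  r1 < Cmod z /\ Rbar_lt (Cmod z) r2.

(* Coefficients of the Weierstrass-type data: Phi_k = phi_k(z) dz. *)
Definition phi1 (b z : C) : C := (1 - b / (z * z))%C.
Definition phi2 (b z : C) : C := (Ci * (1 + b / (z * z)))%C.
Definition phi3 (z : C) : C := (/ z)%C.

(* X = (X1,X2,X3) is "Re of a primitive of Phi" on M:
   each X_k is (real-)differentiable at every z in M with differential
   dX_k(v) = Re (phi_k(z) v), i.e. dX_k = Re Phi_k. *)
Definition is_Re_primitive (r1 : R) (r2 : Rbar) (b : C)
  (X1 X2 X3 : C -> R) : Prop :=
  forall z, annulus r1 r2 z ->
    filterdiff (K := R_AbsRing) X1 (locally z) (fun v => Re (phi1 b z * v)%C) /\
    filterdiff (K := R_AbsRing) X2 (locally z) (fun v => Re (phi2 b z * v)%C) /\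
    filterdiff (K := R_AbsRing) X3 (locally z) (fun v => Re (phi3 z * v)%C).

Definition dX (X1 X2 X3 : C -> R) (p v : C) : R * R * R :=
  (Derive (fun t => X1 (p + RtoC t * v)%C) 0,
   Derive (fun t => X2 (p + RtoC t * v)%C) 0,
   Derive (fun t => X3 (p + RtoC t * v)%C) 0).

Definition is_immersion (r1 : R) (r2 : Rbar) (X1 X2 X3 : C -> R) : Prop :=
  forall p v, annulus r1 r2 p -> v <> 0%C -> dX X1 X2 X3 p v <> (0, 0, 0).

(* Admissible curves: C^1 maps gamma on [0,1] with values in M,
   joining p to q (gamma given on all of R, only [0,1] matters). *)
Definition admissible_curve (r1 : R) (r2 : Rbar) (p q : C) (g : R -> C) : Prop :=
  g 0 = p /\ g 1 = q /\
  (forall t, 0 <= t <= 1 -> annulus r1 r2 (g t)) /\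
  (forall t, 0 <= t <= 1 ->
     ex_derive (fun s => Re (g s)) t /\ ex_derive (fun s => Im (g s)) t /\
     continuous (Derive (fun s => Re (g s))) t /\
     continuous (Derive (fun s => Im (g s))) t).

(* Length of a curve for the induced metric X^*<,>: Euclidean length of X o g. *)
Definition induced_length (X1 X2 X3 : C -> R) (g : R -> C) : R :=
  RInt (fun t => sqrt (Rsqr (Derive (fun s => X1 (g s)) t)
                     + Rsqr (Derive (fun s => X2 (g s)) t)
                     + Rsqr (Derive (fun s => X3 (g s)) t))) 0 1.

Definition induced_dist (r1 : R) (r2 : Rbar) (X1 X2 X3 : C -> R) (p q : C) : Rbar :=
  Glb_Rbar (fun l => exists g, admissible_curve r1 r2 p q g /\
                               l = induced_length X1 X2 X3 g).

Definition induced_metric_complete (r1 : R) (r2 : Rbar) (X1 X2 X3 : C -> R) : Prop :=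
  forall u : nat -> C,
    (forall n, annulus r1 r2 (u n)) ->
    (forall eps, 0 < eps -> exists N, forall m n, (N <= m)%nat -> (N <= n)%nat ->
        Rbar_lt (induced_dist r1 r2 X1 X2 X3 (u m) (u n)) eps) ->
    exists p, annulus r1 r2 p /\
      (forall eps, 0 < eps -> exists N, forall n, (N <= n)%nat ->
        Rbar_lt (induced_dist r1 r2 X1 X2 X3 (u n) p) eps).

Definition complete_immersion (r1 : R) (r2 : Rbar) (X1 X2 X3 : C -> R) : Prop :=
  is_immersion r1 r2 X1 X2 X3 /\ induced_metric_complete r1 r2 X1 X2 X3.

(* Main.v *)
Require Import Defs.
From Stdlib Require Import Reals Lra Psatz.
From Coquelicot Require Import Coquelicot.
Open Scope R_scope.

Definition W1 (b1 b2 x y : R) := b1*(x*x-y*y) + 2*b2*x*y.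
Definition W2 (b1 b2 x y : R) := b2*(x*x-y*y) - 2*b1*x*y.
Definition P1 (b1 b2 x y a c : R) := a - (W1 b1 b2 x y * a - W2 b1 b2 x y * c)/(x*x+y*y)^2.
Definition P2 (b1 b2 x y a c : R) := - c - (W1 b1 b2 x y * c + W2 b1 b2 x y * a)/(x*x+y*y)^2.
Definition P3 (x y a c : R) := (a*x + c*y)/(x*x+y*y).


Lemma P1_eq b1 b2 x y a c : 0 < x*x+y*y ->
  Re (phi1 (b1,b2) (x,y) * (a,c))%C = P1 b1 b2 x y a c.
Proof.
  intros H.
  unfold phi1, P1, W1, W2, Cdiv, Cminus, Cmult, Cinv, Cplus, Copp, Re; simpl.
  assert ((x*x - y*y)*(x*x-y*y) + (x*y+y*x)*(x*y+y*x) = (x*x+y*y)^2) by ring.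
  assert ((x * x - y * y) * ((x * x - y * y) * 1) + (x * y + y * x) * ((x * y + y * x) * 1) <> 0) by nra.
  field_simplify; [reflexivity|nra|nra].
Qed.

Lemma P2_eq b1 b2 x y a c : 0 < x*x+y*y ->
  Re (phi2 (b1,b2) (x,y) * (a,c))%C = P2 b1 b2 x y a c.
Proof.
  intros H.
  unfold phi2, P2, W1, W2, Ci, Cdiv, Cminus, Cmult, Cinv, Cplus, Copp, Re; simpl.
  assert ((x * x - y * y) * ((x * x - y * y) * 1) + (x * y + y * x) * ((x * y + y * x) * 1) <> 0) by nra.
  field_simplify; [reflexivity|nra|nra].
Qed.

Lemma P3_eq x y a c : 0 < x*x+y*y ->
  Re (phi3 (x,y) * (a,c))%C = P3 x y a c.
Proof.
  intros H.
  unfold phi3, P3, Cdiv, Cminus, Cmult, Cinv, Cplus, Copp, Re; simpl.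
  field_simplify; [reflexivity|nra|nra].
Qed.
Lemma chain (f : C -> R) (L : C -> R) (g : R -> C) t a c :
  filterdiff (K:=R_AbsRing) f (locally (g t)) L ->
  is_derive (fun s => Re (g s)) t a -> is_derive (fun s => Im (g s)) t c ->
  is_derive (fun s => f (g s)) t (L (a,c)).
Proof.
  intros Hf Ha Hc.
  assert (Hg : filterdiff (K:=R_AbsRing) (U:=R_NormedModule) (V:=C_R_NormedModule)
     (fun s => (Re (g s), Im (g s))) (locally t) (fun s => (scal s a, scal s c))).
  { apply (filterdiff_comp'_2 (fun s => Re (g s)) (fun s => Im (g s)) (fun u v => (u,v)) t
       (fun s => scal s a) (fun s => scal s c) (fun u v => (u,v))); [exact Ha|exact Hc|].
    apply filterdiff_ext_lin with (fun t => t).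
    - apply filterdiff_ext with (fun t => t). intros [u v]; reflexivity. apply filterdiff_id.
    - intros [u v]; reflexivity. }
  assert (Hg' : filterdiff (K:=R_AbsRing) (U:=R_NormedModule) (V:=C_R_NormedModule)
     g (locally t) (fun s => (scal s a, scal s c))).
  { apply filterdiff_ext with (2 := Hg). intros s. destruct (g s); reflexivity. }
  pose proof (filterdiff_comp' g f t _ _ Hg' Hf) as H.
  unfold is_derive.
  apply filterdiff_ext_lin with (1 := H).
  intros s. destruct Hf as [Hl _].
  change (scal s a, scal s c) with (scal (V:=C_R_NormedModule) s (a,c)).
  apply (linear_scal _ Hl).
Qed.
Lemma cR_plus (f g : R -> R) (x : R) : continuous f x -> continuous g x -> continuous (fun s => f s + g s) x.
Proof. intros; apply (continuous_plus f g); auto. Qed.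
Lemma cR_minus (f g : R -> R) (x : R) : continuous f x -> continuous g x -> continuous (fun s => f s - g s) x.
Proof. intros; apply (continuous_minus f g); auto. Qed.
Lemma cR_mult (f g : R -> R) (x : R) : continuous f x -> continuous g x -> continuous (fun s => f s * g s) x.
Proof. intros; apply (continuous_mult f g); auto. Qed.
Lemma cR_opp (f : R -> R) (x : R) : continuous f x -> continuous (fun s => - f s) x.
Proof. intros; apply (continuous_opp f); auto. Qed.
Lemma cR_const (c x : R) : continuous (fun _ => c) x.
Proof. apply continuous_const. Qed.
Lemma cR_div (f g : R -> R) (x : R) : continuous f x -> continuous g x -> g x <> 0 -> continuous (fun s => f s / g s) x.
Proof. intros. apply cR_mult; auto. apply (continuous_comp g Rinv); auto.
  apply continuity_pt_filterlim. apply continuity_pt_inv; auto. apply continuity_pt_id. Qed.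
Lemma cR_pow (f : R -> R) (x : R) n : continuous f x -> continuous (fun s => f s ^ n) x.
Proof. intros. induction n; simpl. apply cR_const. apply cR_mult; auto. Qed.
Lemma cR_sqr (f : R -> R) (x : R) : continuous f x -> continuous (fun s => Rsqr (f s)) x.
Proof. intros; unfold Rsqr; apply cR_mult; auto. Qed.
Lemma cR_sqrt (f : R -> R) (x : R) : continuous f x -> continuous (fun s => sqrt (f s)) x.
Proof. intros; apply continuous_sqrt_comp; auto. Qed.
Lemma cR_abs (f : R -> R) (x : R) : continuous f x -> continuous (fun s => Rabs (f s)) x.
Proof. intros; apply continuous_Rabs_comp; auto. Qed.
Lemma cR_id x : continuous (fun s : R => s) x.
Proof. apply continuous_id. Qed.

Ltac cR := repeat match goal with
 | |- continuous (fun s => @?f s + @?g s) _ => apply (cR_plus f g)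
 | |- continuous (fun s => @?f s - @?g s) _ => apply (cR_minus f g)
 | |- continuous (fun s => @?f s * @?g s) _ => apply (cR_mult f g)
 | |- continuous (fun s => @?f s / @?g s) _ => apply (cR_div f g)
 | |- continuous (fun s => - @?f s) _ => apply (cR_opp f)
 | |- continuous (fun s => Rsqr (@?f s)) _ => apply (cR_sqr f)
 | |- continuous (fun s => sqrt (@?f s)) _ => apply (cR_sqrt f)
 | |- continuous (fun s => Rabs (@?f s)) _ => apply (cR_abs f)
 | |- continuous (fun s => (@?f s) ^ ?n) _ => apply (cR_pow f)
 | |- continuous (fun s => s) _ => apply cR_id
 | |- continuous (fun s => ?c) _ => apply cR_const
 end.

Definition clamp (t : R) := (1 + Rabs t - Rabs (t - 1)) / 2.

Lemma clamp_cont t : continuous clamp t.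
Proof. unfold clamp. apply cR_div; [|apply cR_const|lra]. cR. Qed.

Lemma clamp_in t : 0 <= clamp t <= 1.
Proof. unfold clamp, Rabs; destruct (Rcase_abs t); destruct (Rcase_abs (t-1)); lra. Qed.

Lemma clamp_id t : 0 <= t <= 1 -> clamp t = t.
Proof. intros. unfold clamp, Rabs; destruct (Rcase_abs t); destruct (Rcase_abs (t-1)); lra. Qed.

Lemma P1_cont b1 b2 (xf yf af cf : R -> R) t : continuous xf t -> continuous yf t -> continuous af t -> continuous cf t ->
  0 < xf t * xf t + yf t * yf t -> continuous (fun s => P1 b1 b2 (xf s) (yf s) (af s) (cf s)) t.
Proof. intros. unfold P1, W1, W2. cR; try assumption. apply pow_nonzero; lra. Qed.
Lemma P2_cont b1 b2 (xf yf af cf : R -> R) t : continuous xf t -> continuous yf t -> continuous af t -> continuous cf t ->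
  0 < xf t * xf t + yf t * yf t -> continuous (fun s => P2 b1 b2 (xf s) (yf s) (af s) (cf s)) t.
Proof. intros. unfold P2, W1, W2. cR; try assumption. apply pow_nonzero; lra. Qed.
Lemma P3_cont (xf yf af cf : R -> R) t : continuous xf t -> continuous yf t -> continuous af t -> continuous cf t ->
  0 < xf t * xf t + yf t * yf t -> continuous (fun s => P3 (xf s) (yf s) (af s) (cf s)) t.
Proof. intros. unfold P3. cR; try assumption. lra. Qed.

Definition Jf (b1 b2 x y a c : R) :=
  sqrt (Rsqr (P1 b1 b2 x y a c) + Rsqr (P2 b1 b2 x y a c) + Rsqr (P3 x y a c)).

Definition Jb (b : C) (g : R -> C) (t : R) :=
  Jf (Re b) (Im b) (Re (g (clamp t))) (Im (g (clamp t)))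
     (Derive (fun s => Re (g s)) (clamp t)) (Derive (fun s => Im (g s)) (clamp t)).

Lemma annulus_pos r1 r2 z : 0 <= r1 -> annulus r1 r2 z -> 0 < Re z * Re z + Im z * Im z.
Proof.
  intros H0 [H1 _]. assert (0 < Cmod z) by lra.
  pose proof (Cmod2_alt z). simpl in H2. nra.
Qed.

Lemma Jb_cont b r1 r2 p q g t : 0 <= r1 -> admissible_curve r1 r2 p q g -> continuous (Jb b g) t.
Proof.
  intros H0 (_ & _ & Hin & Hd).
  pose proof (clamp_in t) as Hc. destruct (Hd _ Hc) as (Ha & Hb & Hca & Hcb).
  pose proof (annulus_pos _ _ _ H0 (Hin _ Hc)) as Hp.
  assert (Cx : continuous (fun s => Re (g (clamp s))) t).
  { apply (@continuous_comp R_UniformSpace R_UniformSpace R_UniformSpace clamp (fun s => Re (g s)) t). apply clamp_cont. exact (ex_derive_continuous _ _ Ha). }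
  assert (Cy : continuous (fun s => Im (g (clamp s))) t).
  { apply (@continuous_comp R_UniformSpace R_UniformSpace R_UniformSpace clamp (fun s => Im (g s)) t). apply clamp_cont. exact (ex_derive_continuous _ _ Hb). }
  assert (Ca : continuous (fun s => Derive (fun u => Re (g u)) (clamp s)) t).
  { apply (@continuous_comp R_UniformSpace R_UniformSpace R_UniformSpace clamp (Derive (fun u => Re (g u))) t). apply clamp_cont. auto. }
  assert (Cc : continuous (fun s => Derive (fun u => Im (g u)) (clamp s)) t).
  { apply (@continuous_comp R_UniformSpace R_UniformSpace R_UniformSpace clamp (Derive (fun u => Im (g u))) t). apply clamp_cont. auto. }
  unfold Jb, Jf. apply cR_sqrt. apply cR_plus; [apply cR_plus|]; apply cR_sqr.
  - apply P1_cont; auto.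
  - apply P2_cont; auto.
  - apply P3_cont; auto.
Qed.

Lemma Dk b r1 r2 X1 X2 X3 g t : 0 <= r1 -> is_Re_primitive r1 r2 b X1 X2 X3 ->
  annulus r1 r2 (g t) -> ex_derive (fun s => Re (g s)) t -> ex_derive (fun s => Im (g s)) t ->
  let a := Derive (fun s => Re (g s)) t in let c := Derive (fun s => Im (g s)) t in
  Derive (fun s => X1 (g s)) t = P1 (Re b) (Im b) (Re (g t)) (Im (g t)) a c /\
  Derive (fun s => X2 (g s)) t = P2 (Re b) (Im b) (Re (g t)) (Im (g t)) a c /\
  Derive (fun s => X3 (g s)) t = P3 (Re (g t)) (Im (g t)) a c.
Proof.
  intros H0 HX Hz Ha Hc a c.
  pose proof (annulus_pos _ _ _ H0 Hz) as Hp.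
  destruct (HX _ Hz) as (H1 & H2 & H3).
  apply Derive_correct in Ha. apply Derive_correct in Hc.
  pose proof (chain _ _ g t _ _ H1 Ha Hc) as E1.
  pose proof (chain _ _ g t _ _ H2 Ha Hc) as E2.
  pose proof (chain _ _ g t _ _ H3 Ha Hc) as E3.
  apply is_derive_unique in E1. apply is_derive_unique in E2. apply is_derive_unique in E3.
  split; [|split]; [refine (eq_trans E1 _)|refine (eq_trans E2 _)|refine (eq_trans E3 _)];
  fold a c; destruct (g t) as [x y]; destruct b as [b1 b2]; simpl in *.
  apply P1_eq; auto. apply P2_eq; auto. apply P3_eq; auto.
Qed.

Definition integrand (X1 X2 X3 : C -> R) (g : R -> C) (t : R) :=
  sqrt (Rsqr (Derive (fun s => X1 (g s)) t)
                     + Rsqr (Derive (fun s => X2 (g s)) t)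
                     + Rsqr (Derive (fun s => X3 (g s)) t)).

Lemma integrand_eq b r1 r2 X1 X2 X3 p q g t : 0 <= r1 -> is_Re_primitive r1 r2 b X1 X2 X3 ->
  admissible_curve r1 r2 p q g -> 0 <= t <= 1 -> integrand X1 X2 X3 g t = Jb b g t.
Proof.
  intros H0 HX Hg Ht. destruct Hg as (_ & _ & Hin & Hd).
  destruct (Hd t Ht) as (Ha & Hc & _).
  destruct (Dk b r1 r2 X1 X2 X3 g t H0 HX (Hin t Ht) Ha Hc) as (E1 & E2 & E3).
  unfold integrand, Jb, Jf. rewrite clamp_id by auto. rewrite E1, E2, E3. reflexivity.
Qed.

Lemma length_Jb b r1 r2 X1 X2 X3 p q g : 0 <= r1 -> is_Re_primitive r1 r2 b X1 X2 X3 ->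
  admissible_curve r1 r2 p q g -> induced_length X1 X2 X3 g = RInt (Jb b g) 0 1.
Proof.
  intros H0 HX Hg. unfold induced_length. apply RInt_ext.
  rewrite Rmin_left, Rmax_right by lra. intros t Ht.
  apply (integrand_eq b r1 r2 X1 X2 X3 p q g t H0 HX Hg). lra.
Qed.

Lemma Jb_int b r1 r2 p q g u v : 0 <= r1 -> admissible_curve r1 r2 p q g -> ex_RInt (Jb b g) u v.
Proof.
  intros. apply (ex_RInt_continuous (V:=R_CompleteNormedModule)). intros. eapply Jb_cont; eauto.
Qed.

Lemma LB b r1 r2 X1 X2 X3 p q g (F dF : R -> R) : 0 <= r1 -> is_Re_primitive r1 r2 b X1 X2 X3 ->
  admissible_curve r1 r2 p q g ->
  (forall t, 0 < t < 1 -> is_derive F t (dF t)) ->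
  (forall t, 0 <= t <= 1 -> continuity_pt F t) ->
  (forall t, dF t <= Jb b g t) ->
  F 1 - F 0 <= induced_length X1 X2 X3 g.
Proof.
  intros H0 HX Hg HF HFc Hle.
  rewrite (length_Jb b r1 r2 X1 X2 X3 p q g H0 HX Hg).
  assert (HD : forall x, is_derive (fun t => RInt (Jb b g) 0 t) x (Jb b g x)).
  { intros x. apply is_derive_RInt with 0.
    - apply filter_forall. intros. apply RInt_correct. eapply Jb_int; eauto.
    - eapply Jb_cont; eauto. }
  destruct (MVT_gen (fun t => RInt (Jb b g) 0 t - F t) 0 1 (fun t => Jb b g t - dF t)) as (c & Hc & E).
  - intros x Hx. rewrite Rmin_left, Rmax_right in Hx by lra.
    apply (is_derive_minus (fun t => RInt (Jb b g) 0 t) F). apply HD. apply HF; auto.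
  - intros x Hx. rewrite Rmin_left, Rmax_right in Hx by lra.
    apply continuity_pt_minus; [|apply HFc; auto].
    apply continuity_pt_filterlim. apply (ex_derive_continuous (fun t => RInt (Jb b g) 0 t)).
    eexists; apply HD.
  - rewrite RInt_point in E. specialize (Hle c). assert (Z: RInt (Jb b g) 0 1 - F 1 - (0 - F 0) = (Jb b g c - dF c) * (1 - 0)) by exact E. nra.
Qed.
Definition f1 (b1 b2 x y : R) := x + (b1*x + b2*y)/(x*x+y*y).
Definition f2 (b1 b2 x y : R) := - y + (b2*x - b1*y)/(x*x+y*y).
Definition f3 (x y : R) := ln (x*x+y*y) / 2.

Ltac dfin Ha Hc xf yf a c t :=
  replace (Derive (fun x => xf x) t) with a by (symmetry; apply is_derive_unique; auto);
  replace (Derive (fun x => yf x) t) with c by (symmetry; apply is_derive_unique; auto).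

Lemma d1 b1 b2 (xf yf : R -> R) t a c : is_derive xf t a -> is_derive yf t c -> 0 < xf t * xf t + yf t * yf t ->
  is_derive (fun s => f1 b1 b2 (xf s) (yf s)) t (P1 b1 b2 (xf t) (yf t) a c).
Proof.
  intros Ha Hc Hp. unfold f1.
  auto_derive.
  - repeat split; try (eexists; eassumption). lra.
  - dfin Ha Hc xf yf a c t. unfold P1, W1, W2. field. lra.
Qed.
Lemma d2 b1 b2 (xf yf : R -> R) t a c : is_derive xf t a -> is_derive yf t c -> 0 < xf t * xf t + yf t * yf t ->
  is_derive (fun s => f2 b1 b2 (xf s) (yf s)) t (P2 b1 b2 (xf t) (yf t) a c).
Proof.
  intros Ha Hc Hp. unfold f2.
  auto_derive.
  - repeat split; try (eexists; eassumption). lra.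
  - dfin Ha Hc xf yf a c t. unfold P2, W1, W2. field. lra.
Qed.
Lemma d3 (xf yf : R -> R) t a c : is_derive xf t a -> is_derive yf t c -> 0 < xf t * xf t + yf t * yf t ->
  is_derive (fun s => f3 (xf s) (yf s)) t (P3 (xf t) (yf t) a c).
Proof.
  intros Ha Hc Hp. unfold f3.
  auto_derive.
  - repeat split; try (eexists; eassumption). lra.
  - dfin Ha Hc xf yf a c t. unfold P3. field. lra.
Qed.

Lemma Jf_ge b1 b2 x y a c :
  Rabs (P1 b1 b2 x y a c) <= Jf b1 b2 x y a c /\
  Rabs (P2 b1 b2 x y a c) <= Jf b1 b2 x y a c /\
  Rabs (P3 x y a c) <= Jf b1 b2 x y a c.
Proof.
  unfold Jf. set (u := P1 b1 b2 x y a c). set (v := P2 b1 b2 x y a c). set (w := P3 x y a c).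
  pose proof (Rle_0_sqr u). pose proof (Rle_0_sqr v). pose proof (Rle_0_sqr w).
  split; [|split]; rewrite <- sqrt_Rsqr_abs; apply sqrt_le_1_alt; lra.
Qed.

Lemma LBk b r1 r2 X1 X2 X3 p q g (fk : R -> R -> R) (Pk : R -> R -> R -> R -> R) :
  0 <= r1 -> is_Re_primitive r1 r2 b X1 X2 X3 -> admissible_curve r1 r2 p q g ->
  (forall (xf yf : R -> R) t a c, is_derive xf t a -> is_derive yf t c -> 0 < xf t * xf t + yf t * yf t ->
     is_derive (fun s => fk (xf s) (yf s)) t (Pk (xf t) (yf t) a c)) ->
  (forall x y a c, Rabs (Pk x y a c) <= Jf (Re b) (Im b) x y a c) ->
  Rabs (fk (Re q) (Im q) - fk (Re p) (Im p)) <= induced_length X1 X2 X3 g.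
Proof.
  intros H0 HX Hg Hder Hb.
  assert (Hg' := Hg). destruct Hg' as (E0 & E1 & Hin & Hd).
  assert (HD : forall t, 0 <= t <= 1 -> is_derive (fun s => fk (Re (g s)) (Im (g s))) t
     (Pk (Re (g t)) (Im (g t)) (Derive (fun s => Re (g s)) t) (Derive (fun s => Im (g s)) t))).
  { intros t Ht. destruct (Hd t Ht) as (Ha & Hc & _).
    apply (Hder (fun s => Re (g s)) (fun s => Im (g s))).
    apply Derive_correct; auto. apply Derive_correct; auto.
    apply (annulus_pos r1 r2); auto. }
  assert (Hs : forall sg, sg * (fk (Re q) (Im q) - fk (Re p) (Im p)) <= induced_length X1 X2 X3 g
      \/ (sg <> 1 /\ sg <> -1)).
  { intros sg. destruct (Req_dec sg 1) as [Hs1|Hs1]; [|destruct (Req_dec sg (-1)) as [Hs2|Hs2]; [|right; lra]];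
    left.
    all: eapply (LB b r1 r2 X1 X2 X3 p q g (fun t => sg * fk (Re (g t)) (Im (g t)))
        (fun t => sg * Pk (Re (g (clamp t))) (Im (g (clamp t))) (Derive (fun s => Re (g s)) (clamp t)) (Derive (fun s => Im (g s)) (clamp t)))) in H0; eauto.
    all: try (rewrite E0, E1 in H0; lra).
    all: try (intros t Ht; rewrite clamp_id by lra; apply is_derive_scal; apply HD; lra).
    all: try (intros t Ht; apply continuity_pt_filterlim;
       apply (ex_derive_continuous (fun t0 => sg * fk (Re (g t0)) (Im (g t0))));
       eexists; apply is_derive_scal; apply HD; lra).
    all: intros t; unfold Jb; specialize (Hb (Re (g (clamp t))) (Im (g (clamp t))) (Derive (fun s => Re (g s)) (clamp t)) (Derive (fun s => Im (g s)) (clamp t)));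
      revert Hb; generalize (Pk (Re (g (clamp t))) (Im (g (clamp t))) (Derive (fun s => Re (g s)) (clamp t)) (Derive (fun s => Im (g s)) (clamp t))); intros r Hr;
      rewrite ?Hs1, ?Hs2; unfold Rabs in Hr; destruct (Rcase_abs r); lra. }
  destruct (Hs 1) as [A|A]; [|lra]. destruct (Hs (-1)) as [B|B]; [|lra].
  unfold Rabs; destruct (Rcase_abs (fk (Re q) (Im q) - fk (Re p) (Im p))); lra.
Qed.

Lemma dist_lb b r1 r2 X1 X2 X3 p q (fk : R -> R -> R) (Pk : R -> R -> R -> R -> R) :
  0 <= r1 -> is_Re_primitive r1 r2 b X1 X2 X3 ->
  (forall (xf yf : R -> R) t a c, is_derive xf t a -> is_derive yf t c -> 0 < xf t * xf t + yf t * yf t ->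
     is_derive (fun s => fk (xf s) (yf s)) t (Pk (xf t) (yf t) a c)) ->
  (forall x y a c, Rabs (Pk x y a c) <= Jf (Re b) (Im b) x y a c) ->
  Rbar_le (Rabs (fk (Re q) (Im q) - fk (Re p) (Im p))) (induced_dist r1 r2 X1 X2 X3 p q).
Proof.
  intros H0 HX Hder Hb. unfold induced_dist.
  destruct (Glb_Rbar_correct (fun l => exists g, admissible_curve r1 r2 p q g /\
                               l = induced_length X1 X2 X3 g)) as [_ H].
  apply H. intros l [g [Hg ->]]. simpl. eapply LBk; eauto.
Qed.

Lemma dist_lb1 b r1 r2 X1 X2 X3 p q : 0 <= r1 -> is_Re_primitive r1 r2 b X1 X2 X3 ->
  Rbar_le (Rabs (f1 (Re b) (Im b) (Re q) (Im q) - f1 (Re b) (Im b) (Re p) (Im p))) (induced_dist r1 r2 X1 X2 X3 p q).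
Proof. intros; eapply (dist_lb _ _ _ _ _ _ _ _ _ (P1 (Re b) (Im b))); eauto.
  intros; apply d1; auto. intros; apply Jf_ge. Qed.
Lemma dist_lb2 b r1 r2 X1 X2 X3 p q : 0 <= r1 -> is_Re_primitive r1 r2 b X1 X2 X3 ->
  Rbar_le (Rabs (f2 (Re b) (Im b) (Re q) (Im q) - f2 (Re b) (Im b) (Re p) (Im p))) (induced_dist r1 r2 X1 X2 X3 p q).
Proof. intros; eapply (dist_lb _ _ _ _ _ _ _ _ _ (P2 (Re b) (Im b))); eauto.
  intros; apply d2; auto. intros; apply Jf_ge. Qed.
Lemma dist_lb3 b r1 r2 X1 X2 X3 p q : 0 <= r1 -> is_Re_primitive r1 r2 b X1 X2 X3 ->
  Rbar_le (Rabs (f3 (Re q) (Im q) - f3 (Re p) (Im p))) (induced_dist r1 r2 X1 X2 X3 p q).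
Proof. intros; eapply (dist_lb _ _ _ _ _ _ _ _ _ P3); eauto.
  intros; apply d3; auto. intros; apply Jf_ge. Qed.

Definition seg (p q : C) (t : R) : C := (Re p + t * (Re q - Re p), Im p + t * (Im q - Im p)).

Lemma seg_der (u d t : R) : is_derive (fun s => u + s * d) t d.
Proof. auto_derive; auto; ring. Qed.

Lemma seg_adm r1 r2 p q : (forall t, 0 <= t <= 1 -> annulus r1 r2 (seg p q t)) ->
  admissible_curve r1 r2 p q (seg p q).
Proof.
  intros H. split; [|split; [|split]]; auto.
  - destruct p; unfold seg; simpl; f_equal; ring.
  - destruct p, q; unfold seg; simpl; f_equal; ring.
  - intros t Ht. unfold seg; simpl. split; [|split; [|split]].
    + eexists; apply seg_der.
    + eexists; apply seg_der.
    + apply continuous_ext with (fun _ => Re q - Re p). intros x; symmetry; apply is_derive_unique, seg_der.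
      apply continuous_const.
    + apply continuous_ext with (fun _ => Im q - Im p). intros x; symmetry; apply is_derive_unique, seg_der.
      apply continuous_const.
Qed.

Lemma UB b r1 r2 X1 X2 X3 p q B : 0 <= r1 -> is_Re_primitive r1 r2 b X1 X2 X3 ->
  (forall t, 0 <= t <= 1 -> annulus r1 r2 (seg p q t)) ->
  (forall t, 0 <= t <= 1 -> Jf (Re b) (Im b) (Re (seg p q t)) (Im (seg p q t)) (Re q - Re p) (Im q - Im p) <= B) ->
  induced_length X1 X2 X3 (seg p q) <= B.
Proof.
  intros H0 HX Hin HB. pose proof (seg_adm r1 r2 p q Hin) as Hg.
  rewrite (length_Jb b r1 r2 X1 X2 X3 p q _ H0 HX Hg).
  apply Rle_trans with (RInt (fun _ => B) 0 1).
  - apply RInt_le. lra. eapply Jb_int; eauto. apply ex_RInt_const.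
    intros t Ht. unfold Jb. rewrite clamp_id by lra.
    replace (Derive (fun s => Re (seg p q s)) t) with (Re q - Re p).
    replace (Derive (fun s => Im (seg p q s)) t) with (Im q - Im p).
    apply HB; lra.
    symmetry; apply is_derive_unique, seg_der.
    symmetry; apply is_derive_unique, seg_der.
  - rewrite RInt_const. simpl. unfold scal; simpl; unfold mult; simpl. lra.
Qed.


Lemma sqrt3_le u v w : sqrt (Rsqr u + Rsqr v + Rsqr w) <= Rabs u + Rabs v + Rabs w.
Proof.
  pose proof (Rabs_pos u); pose proof (Rabs_pos v); pose proof (Rabs_pos w).
  rewrite <- (sqrt_Rsqr (Rabs u + Rabs v + Rabs w)) by lra.
  apply sqrt_le_1_alt. rewrite (Rsqr_abs u), (Rsqr_abs v), (Rsqr_abs w). unfold Rsqr. nra.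
Qed.

Lemma Cmod_nz z : 0 < Cmod z -> z <> 0%C.
Proof. intros H E; rewrite E, Cmod_0 in H; lra. Qed.

Lemma Cmod_w b z ρ : 0 < ρ <= Cmod z -> Cmod (b / (z * z))%C <= Cmod b / (ρ * ρ).
Proof.
  intros H. assert (Hz : z <> 0%C) by (apply Cmod_nz; lra).
  unfold Cdiv. rewrite Cmod_mult, Cmod_inv, Cmod_mult.
  2: { apply Cmult_neq_0; auto. }
  pose proof (Cmod_ge_0 b). unfold Rdiv. apply Rmult_le_compat_l; auto.
  apply Rinv_le_contravar. nra. nra.
Qed.

Lemma Jf_bound b z v ρ : 0 < ρ <= Cmod z ->
  Jf (Re b) (Im b) (Re z) (Im z) (Re v) (Im v) <= 3 * (1 + Cmod b / (ρ * ρ) + / ρ) * Cmod v.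
Proof.
  intros H. assert (Hz : z <> 0%C) by (apply Cmod_nz; lra).
  assert (Hp : 0 < Re z * Re z + Im z * Im z) by (apply (annulus_pos 0 p_infty); [lra| split; simpl; auto; lra]).
  assert (E1 : P1 (Re b) (Im b) (Re z) (Im z) (Re v) (Im v) = Re (phi1 b z * v)%C).
  { destruct b, z, v; symmetry; apply P1_eq; auto. }
  assert (E2 : P2 (Re b) (Im b) (Re z) (Im z) (Re v) (Im v) = Re (phi2 b z * v)%C).
  { destruct b, z, v; symmetry; apply P2_eq; auto. }
  assert (E3 : P3 (Re z) (Im z) (Re v) (Im v) = Re (phi3 z * v)%C).
  { destruct z, v; symmetry; apply P3_eq; auto. }
  pose proof (Cmod_w b z ρ H) as Hw.
  set (K := 1 + Cmod b / (ρ * ρ) + / ρ).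
  assert (Hb0 : 0 <= Cmod b / (ρ * ρ)) by (apply Rdiv_le_0_compat; [apply Cmod_ge_0|nra]).
  assert (Hi : 0 < / ρ) by (apply Rinv_0_lt_compat; lra).
  pose proof (Cmod_ge_0 v) as Hv.
  assert (B1 : Cmod (phi1 b z) <= K).
  { unfold phi1, Cminus. eapply Rle_trans; [apply Cmod_triangle|]. rewrite Cmod_opp, Cmod_1. unfold K; lra. }
  assert (B2 : Cmod (phi2 b z) <= K).
  { unfold phi2. rewrite Cmod_mult, Cmod_Ci, Rmult_1_l. eapply Rle_trans; [apply Cmod_triangle|]. rewrite Cmod_1. unfold K; lra. }
  assert (B3 : Cmod (phi3 z) <= K).
  { unfold phi3. rewrite Cmod_inv by auto. assert (/ Cmod z <= / ρ) by (apply Rinv_le_contravar; lra). unfold K; lra. }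
  unfold Jf. rewrite E1, E2, E3. eapply Rle_trans; [apply sqrt3_le|].
  assert (forall w, Cmod w <= K -> Rabs (Re (w * v)%C) <= K * Cmod v).
  { intros w Hw'. eapply Rle_trans; [apply re_le_Cmod|]. rewrite Cmod_mult. apply Rmult_le_compat_r; auto. }
  pose proof (H0 _ B1); pose proof (H0 _ B2); pose proof (H0 _ B3). lra.
Qed.


Lemma Cmod_pair (a b : R) : Cmod (a, b) = sqrt (a*a + b*b).
Proof. unfold Cmod; simpl. f_equal; ring. Qed.

Lemma Cmod_pair_le (a b : R) : Cmod (a, b) <= Rabs a + Rabs b.
Proof.
  rewrite Cmod_pair. pose proof (Rabs_pos a); pose proof (Rabs_pos b).
  rewrite <- (sqrt_Rsqr (Rabs a + Rabs b)) by lra.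
  apply sqrt_le_1_alt. unfold Rsqr.
  assert (Rabs a * Rabs a = a * a) by (rewrite <- Rabs_mult; apply Rabs_pos_eq; nra).
  assert (Rabs b * Rabs b = b * b) by (rewrite <- Rabs_mult; apply Rabs_pos_eq; nra).
  nra.
Qed.

Lemma Rbar_le_lt (x : R) d (e : R) : Rbar_le x d -> Rbar_lt d e -> x < e.
Proof. destruct d; simpl; intros; try lra; contradiction. Qed.

Lemma dist_seg b r1 r2 X1 X2 X3 p q ρ : 0 <= r1 -> 0 < ρ -> is_Re_primitive r1 r2 b X1 X2 X3 ->
  (forall t, 0 <= t <= 1 -> annulus r1 r2 (seg p q t) /\ ρ <= Cmod (seg p q t)) ->
  Rbar_le (induced_dist r1 r2 X1 X2 X3 p q)
    (3 * (1 + Cmod b / (ρ * ρ) + / ρ) * (Rabs (Re q - Re p) + Rabs (Im q - Im p))).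
Proof.
  intros H0 Hr HX Hs. unfold induced_dist.
  destruct (Glb_Rbar_correct (fun l => exists g, admissible_curve r1 r2 p q g /\
                               l = induced_length X1 X2 X3 g)) as [H _].
  eapply Rbar_le_trans. apply H. exists (seg p q); split; [apply seg_adm; apply Hs|reflexivity].
  simpl. eapply (UB b r1 r2); eauto. apply Hs. intros t Ht.
  eapply Rle_trans. apply (Jf_bound b (seg p q t) (Re q - Re p, Im q - Im p) ρ). split; auto; apply Hs; auto.
  apply Rmult_le_compat_l. 
  - assert (0 <= Cmod b / (ρ * ρ)) by (apply Rdiv_le_0_compat; [apply Cmod_ge_0|nra]).
    assert (0 < / ρ) by (apply Rinv_0_lt_compat; lra). lra.
  - apply Cmod_pair_le.
Qed.

Lemma lim_f3 (x : nat -> R) (R0 : R) : is_lim_seq x R0 -> 0 < R0 ->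
  is_lim_seq (fun n => f3 (x n) 0) (f3 R0 0).
Proof.
  intros Hx HR. apply (is_lim_seq_continuous (fun y => f3 y 0) x R0); [|exact Hx].
  apply continuity_pt_filterlim. unfold f3.
  apply (cR_div (fun y => ln (y*y+0*0)) (fun _ => 2)); [|apply cR_const|lra].
  apply (@continuous_comp R_UniformSpace R_UniformSpace R_UniformSpace (fun y => y*y+0*0) ln).
  cR. apply continuous_ln. nra.
Qed.

Lemma lim_uniq (u : nat -> R) (a c : R) : is_lim_seq u a -> is_lim_seq u c -> a = c.
Proof.
  intros H1 H2. apply is_lim_seq_unique in H1. apply is_lim_seq_unique in H2.
  rewrite H1 in H2. injection H2; auto.
Qed.

Lemma between_r2 (r2 : Rbar) (a c s : R) : Rbar_lt a r2 -> Rbar_lt c r2 -> s <= Rmax a c -> Rbar_lt s r2.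
Proof.
  destruct r2; simpl; auto. intros. unfold Rmax in *. destruct (Rle_dec a c); lra.
Qed.

Lemma incompl b r1 r2 X1 X2 X3 (x : nat -> R) ρ (R0 : R) :
  0 <= r1 -> 0 < ρ -> is_Re_primitive r1 r2 b X1 X2 X3 ->
  (forall n, r1 < x n /\ Rbar_lt (x n) r2 /\ ρ <= x n) ->
  is_lim_seq x R0 -> 0 < R0 -> (forall p, annulus r1 r2 p -> Cmod p <> R0) ->
  ~ induced_metric_complete r1 r2 X1 X2 X3.
Proof.
  intros H0 Hr HX Hx Hl HR0 Hne Hc.
  set (K := 3 * (1 + Cmod b / (ρ * ρ) + / ρ)).
  assert (HK : 0 < K).
  { assert (0 <= Cmod b / (ρ * ρ)) by (apply Rdiv_le_0_compat; [apply Cmod_ge_0|nra]).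
    assert (0 < / ρ) by (apply Rinv_0_lt_compat; lra). unfold K; lra. }
  assert (Hann : forall n, annulus r1 r2 (RtoC (x n))).
  { intros n. destruct (Hx n) as (A & B & _). split; rewrite Cmod_R, Rabs_pos_eq by lra; auto. }
  destruct (Hc (fun n => RtoC (x n)) Hann) as (p & Hp & Hconv).
  - intros eps Heps.
    assert (He : 0 < eps / (2 * K)) by (apply Rdiv_lt_0_compat; lra).
    apply is_lim_seq_spec in Hl. destruct (Hl (mkposreal _ He)) as [N HN]. simpl in HN.
    exists N. intros m n Hm Hn.
    specialize (HN m Hm) as Am. specialize (HN n Hn) as An.
    eapply Rbar_le_lt_trans.
    apply (dist_seg b r1 r2 X1 X2 X3 (x m) (x n) ρ H0 Hr HX).
    + intros t Ht. destruct (Hx m) as (Bm1 & Bm2 & Bm3). destruct (Hx n) as (Bn1 & Bn2 & Bn3).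
      unfold seg, RtoC; simpl. rewrite Cmod_pair.
      replace (sqrt ((x m + t * (x n - x m)) * (x m + t * (x n - x m)) + (0 + t * (0 - 0)) * (0 + t * (0 - 0))))
        with (x m + t * (x n - x m)).
      2: { replace ((0 + t * (0 - 0)) * (0 + t * (0 - 0))) with 0 by ring. rewrite Rplus_0_r.
           rewrite sqrt_square; auto. nra. }
      assert (ρ <= x m + t * (x n - x m)) by nra.
      assert (r1 < x m + t * (x n - x m)).
      { assert (0 <= (1-t)*(x m - r1)) by (apply Rmult_le_pos; lra).
        assert (0 <= t*(x n - r1)) by (apply Rmult_le_pos; lra).
        destruct (Req_dec t 0). subst; lra. assert (0 < t*(x n - r1)) by (apply Rmult_lt_0_compat; lra). lra. }
      split; [split|]; rewrite ?Cmod_pair.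
      * replace (sqrt ((x m + t * (x n - x m)) * (x m + t * (x n - x m)) + (0 + t * (0 - 0)) * (0 + t * (0 - 0))))
        with (x m + t * (x n - x m)). nra.
        replace ((0 + t * (0 - 0)) * (0 + t * (0 - 0))) with 0 by ring. rewrite Rplus_0_r.
           rewrite sqrt_square; auto. nra.
      * replace (sqrt ((x m + t * (x n - x m)) * (x m + t * (x n - x m)) + (0 + t * (0 - 0)) * (0 + t * (0 - 0))))
        with (x m + t * (x n - x m)).
        apply (between_r2 r2 (x m) (x n)); auto. unfold Rmax; destruct (Rle_dec (x m) (x n)); nra.
        replace ((0 + t * (0 - 0)) * (0 + t * (0 - 0))) with 0 by ring. rewrite Rplus_0_r.
           rewrite sqrt_square; auto. nra.
      * lra.
    + simpl. fold K. replace (0 - 0) with 0 by ring. rewrite Rabs_R0, Rplus_0_r.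
      assert (Rabs (x n - x m) < eps / K).
      { replace (x n - x m) with ((x n - R0) - (x m - R0)) by ring.
        eapply Rle_lt_trans. apply Rabs_triang. rewrite Rabs_Ropp.
        replace (eps / K) with (eps / (2 * K) + eps / (2 * K)) by (field; lra). lra. }
      apply (Rmult_lt_compat_l K) in H; auto.
      replace (K * (eps / K)) with eps in H by (field; lra). exact H.
  - apply (Hne p Hp).
    assert (L1 := lim_f3 x R0 Hl HR0).
    assert (L2 : is_lim_seq (fun n => f3 (x n) 0) (f3 (Re p) (Im p))).
    { apply is_lim_seq_spec. intros eps. destruct (Hconv eps (cond_pos eps)) as [N HN].
      exists N. intros n Hn. specialize (HN n Hn).
      pose proof (dist_lb3 b r1 r2 X1 X2 X3 (RtoC (x n)) p H0 HX) as Hd.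
      pose proof (Rbar_le_lt _ _ _ Hd HN). simpl in H. rewrite Rabs_minus_sym. exact H. }
    pose proof (lim_uniq _ _ _ L1 L2) as E. unfold f3 in E.
    assert (E' : ln (R0 * R0 + 0 * 0) = ln (Re p * Re p + Im p * Im p)) by lra.
    pose proof (annulus_pos _ _ _ H0 Hp).
    apply ln_inv in E'; [|nra|nra].
    rewrite <- (sqrt_square R0) by lra. replace (R0*R0) with (Re p * Re p + Im p * Im p) by lra. unfold Cmod. f_equal. unfold Re, Im. ring.
Qed.


Lemma dX_eq b r1 r2 X1 X2 X3 p v : 0 <= r1 -> is_Re_primitive r1 r2 b X1 X2 X3 -> annulus r1 r2 p ->
  dX X1 X2 X3 p v = (P1 (Re b) (Im b) (Re p) (Im p) (Re v) (Im v),
                     P2 (Re b) (Im b) (Re p) (Im p) (Re v) (Im v),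
                     P3 (Re p) (Im p) (Re v) (Im v)).
Proof.
  intros H0 HX Hp.
  set (g := fun t : R => (p + RtoC t * v)%C).
  assert (Eg0 : g 0 = p). { unfold g. destruct p, v. unfold RtoC, Cplus, Cmult; simpl. f_equal; ring. }
  assert (Dx : is_derive (fun s => Re (g s)) 0 (Re v)).
  { apply is_derive_ext with (fun s => Re p + s * Re v). intros s; unfold g; destruct p, v; simpl; ring. apply seg_der. }
  assert (Dy : is_derive (fun s => Im (g s)) 0 (Im v)).
  { apply is_derive_ext with (fun s => Im p + s * Im v). intros s; unfold g; destruct p, v; simpl; ring. apply seg_der. }
  assert (Hg0 : annulus r1 r2 (g 0)) by (rewrite Eg0; auto).
  destruct (Dk b r1 r2 X1 X2 X3 g 0 H0 HX Hg0 (ex_intro _ _ Dx) (ex_intro _ _ Dy)) as (E1 & E2 & E3).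
  replace (Derive (fun s : R => Re (g s)) 0) with (Re v) in E1, E2, E3 by (symmetry; apply is_derive_unique; exact Dx).
  replace (Derive (fun s : R => Im (g s)) 0) with (Im v) in E1, E2, E3 by (symmetry; apply is_derive_unique; exact Dy).
  rewrite Eg0 in E1, E2, E3.
  unfold dX; f_equal; [f_equal|]; [exact E1|exact E2|exact E3].
Qed.

Lemma imm_neg b1 s : 0 < s -> b1 = -(s*s) ->
  P1 b1 0 s 0 0 s = 0 /\ P2 b1 0 s 0 0 s = 0 /\ P3 s 0 0 s = 0.
Proof.
  intros Hs ->. unfold P1, P2, P3, W1, W2. split; [|split]; field; lra.
Qed.

Lemma div_eq (X d a : R) : d <> 0 -> X / d = a -> X = a * d.
Proof. intros H E. rewrite <- E. field; auto. Qed.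

Lemma imm_pos b1 b2 x y a c : 0 < x*x+y*y -> 0 < a*a+c*c ->
  P1 b1 b2 x y a c = 0 -> P2 b1 b2 x y a c = 0 -> P3 x y a c = 0 -> b2 = 0 /\ b1 < 0.
Proof.
  intros Hr Hv E1 E2 E3. unfold P1, P2, P3 in *.
  set (r := x*x+y*y) in *. set (w1 := W1 b1 b2 x y) in *. set (w2 := W2 b1 b2 x y) in *.
  assert (Hr2 : r^2 <> 0) by (apply pow_nonzero; lra).
  assert (F1 : w1 * a - w2 * c = a * r^2) by (apply div_eq; auto; lra).
  assert (F2 : w1 * c + w2 * a = - c * r^2) by (apply div_eq; auto; lra).
  assert (F3 : a * x + c * y = 0) by (apply div_eq in E3; lra).
  assert (G1 : w1 * (a*a+c*c) = (a*a - c*c) * r^2).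
  { replace (w1 * (a*a+c*c)) with (a*(w1 * a - w2 * c) + c*(w1 * c + w2 * a)) by ring. rewrite F1, F2. ring. }
  assert (G2 : w2 * (a*a+c*c) = - 2 * a * c * r^2).
  { replace (w2 * (a*a+c*c)) with (a*(w1 * c + w2 * a) - c*(w1 * a - w2 * c)) by ring. rewrite F1, F2. ring. }
  set (s := (c*x - a*y)/r).
  assert (Ha : a = - s * y). { unfold s. apply (Rmult_eq_reg_r r); [|lra].
     replace (-((c*x-a*y)/r)*y*r) with (-(c*x-a*y)*y) by (field; lra).
     assert (x*(a*x+c*y) = 0) by (rewrite F3; ring). unfold r. nra. }
  assert (Hc : c = s * x). { unfold s. apply (Rmult_eq_reg_r r); [|lra].
     replace ((c*x-a*y)/r*x*r) with ((c*x-a*y)*x) by (field; lra).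
     assert (y*(a*x+c*y) = 0) by (rewrite F3; ring). unfold r. nra. }
  assert (Hs : s * s * r = a*a+c*c) by (rewrite Ha, Hc; unfold r; ring).
  assert (Hs0 : 0 < s * s) by (apply (Rmult_lt_reg_r r); nra).
  assert (G1' : w1 = r * (y*y - x*x)).
  { apply (Rmult_eq_reg_r (s*s*r)); [|nra]. rewrite Hs, G1, Ha, Hc. unfold r. ring. }
  assert (G2' : w2 = 2 * r * x * y).
  { apply (Rmult_eq_reg_r (s*s*r)); [|nra]. rewrite Hs, G2, Ha, Hc. unfold r. ring. }
  unfold w1, w2, W1, W2 in *.
  set (u := b1 + r).
  assert (U1 : u * (x*x - y*y) + 2 * b2 * x * y = 0) by (unfold u, r in *; nra).
  assert (U2 : b2 * (x*x - y*y) - 2 * u * x * y = 0) by (unfold u, r in *; nra).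
  assert (V1 : u * (r*r) = 0).
  { replace (u * (r*r)) with ((x*x-y*y) * (u * (x*x - y*y) + 2 * b2 * x * y) - 2*x*y*(b2 * (x*x - y*y) - 2 * u * x * y)) by (unfold r; ring).
    rewrite U1, U2. ring. }
  assert (V2 : b2 * (r*r) = 0).
  { replace (b2 * (r*r)) with (2*x*y * (u * (x*x - y*y) + 2 * b2 * x * y) + (x*x-y*y)*(b2 * (x*x - y*y) - 2 * u * x * y)) by (unfold r; ring).
    rewrite U1, U2. ring. }
  assert (r*r <> 0) by nra.
  apply Rmult_integral in V1. apply Rmult_integral in V2.
  destruct V1, V2; try contradiction. unfold u in *. split; lra.
Qed.


Lemma cauchy_lim (F : nat -> R) :
  (forall eps, 0 < eps -> exists N, forall m n, (N <= m)%nat -> (N <= n)%nat -> Rabs (F n - F m) < eps) ->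
  exists l : R, is_lim_seq F l.
Proof.
  intros H. apply (ex_lim_seq_cauchy_corr F). intros eps.
  destruct (H eps (cond_pos eps)) as [N HN]. exists N. intros n m Hn Hm. apply HN; auto.
Qed.

Lemma cauchy_fk X1 X2 X3 (u : nat -> C) (fk : C -> R) :
  (forall p q, Rbar_le (Rabs (fk q - fk p)) (induced_dist 0 p_infty X1 X2 X3 p q)) ->
  (forall eps, 0 < eps -> exists N, forall m n, (N <= m)%nat -> (N <= n)%nat ->
        Rbar_lt (induced_dist 0 p_infty X1 X2 X3 (u m) (u n)) eps) ->
  exists l : R, is_lim_seq (fun n => fk (u n)) l.
Proof.
  intros Hlb Hc. apply cauchy_lim. intros eps He. destruct (Hc eps He) as [N HN].
  exists N. intros m n Hm Hn. apply (Rbar_le_lt _ _ _ (Hlb (u m) (u n))). apply HN; auto.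
Qed.

Lemma lim_pair (xs ys : nat -> R) (x y ε : R) : is_lim_seq xs x -> is_lim_seq ys y -> 0 < ε ->
  exists N, forall n, (N <= n)%nat -> Rabs (xs n - x) < ε /\ Rabs (ys n - y) < ε.
Proof.
  intros Hx Hy He. apply is_lim_seq_spec in Hx. apply is_lim_seq_spec in Hy.
  destruct (Hx (mkposreal _ He)) as [N1 H1]. destruct (Hy (mkposreal _ He)) as [N2 H2].
  exists (max N1 N2). intros n Hn. split; [apply H1|apply H2]; lia.
Qed.

Lemma dnz_aux r b1 b2 : 0 < r -> (1+b1/r)*(1+b1/r) + b2/r*(b2/r) <> 0 -> (r+b1)*(r+b1)+b2*b2 <> 0.
Proof.
  intros Hr H E. apply H.
  replace ((1+b1/r)*(1+b1/r) + b2/r*(b2/r)) with (((r+b1)*(r+b1)+b2*b2)/(r*r)) by (field; lra).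
  rewrite E. field. lra.
Qed.

Lemma compl b X1 X2 X3 : is_Re_primitive 0 p_infty b X1 X2 X3 -> ~ (Im b = 0 /\ Re b < 0) ->
  induced_metric_complete 0 p_infty X1 X2 X3.
Proof.
  intros HX Hb u Hu Hc.
  set (b1 := Re b) in *. set (b2 := Im b) in *.
  assert (H0 : 0 <= 0) by lra.
  destruct (cauchy_fk X1 X2 X3 u (fun z => f1 b1 b2 (Re z) (Im z))) as [L1 HL1]; auto.
  { intros; apply (dist_lb1 b); auto. }
  destruct (cauchy_fk X1 X2 X3 u (fun z => f2 b1 b2 (Re z) (Im z))) as [L2 HL2]; auto.
  { intros; apply (dist_lb2 b); auto. }
  destruct (cauchy_fk X1 X2 X3 u (fun z => f3 (Re z) (Im z))) as [L3 HL3]; auto.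
  { intros; apply (dist_lb3 b); auto. }
  set (xs := fun n => Re (u n)). set (ys := fun n => Im (u n)).
  set (rho := fun n => xs n * xs n + ys n * ys n).
  assert (Hrho : forall n, 0 < rho n) by (intros n; apply (annulus_pos 0 p_infty); auto).
  set (rs := exp (2 * L3)).
  assert (Hrs : 0 < rs) by apply exp_pos.
  assert (Lrho : is_lim_seq rho rs).
  { apply is_lim_seq_ext with (fun n => exp (2 * f3 (Re (u n)) (Im (u n)))).
    - intros n. unfold f3. replace (2 * (ln (Re (u n) * Re (u n) + Im (u n) * Im (u n)) / 2))
        with (ln (rho n)) by (unfold rho, xs, ys; field). apply exp_ln; auto.
    - apply (is_lim_seq_continuous (fun y => exp (2 * y)) _ L3).
      apply continuity_pt_filterlim. apply continuous_exp_comp. apply (cR_mult (fun _ => 2) (fun y => y)); cR. exact HL3. }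
  set (al := fun r => 1 + b1 / r). set (ga := fun r => b2 / r).
  assert (Dnz : forall r, 0 < r -> al r * al r + ga r * ga r <> 0).
  { intros r Hr E. apply Hb. unfold al, ga in E.
    assert (SQ : forall A B : R, A*A+B*B = 0 -> A = 0 /\ B = 0) by (intros; split; nra).
    destruct (SQ _ _ E) as [E2 E1].
    assert (b2 = 0 * r) by (apply div_eq; lra).
    assert (b1 = -1 * r) by (apply div_eq; lra).
    split; lra. }
  assert (Lal : is_lim_seq (fun n => al (rho n)) (al rs)).
  { unfold al. apply is_lim_seq_plus'. apply is_lim_seq_const. apply is_lim_seq_div'; auto. apply is_lim_seq_const. lra. }
  assert (Lga : is_lim_seq (fun n => ga (rho n)) (ga rs)).
  { unfold ga. apply is_lim_seq_div'; auto. apply is_lim_seq_const. lra. }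
  assert (LD : is_lim_seq (fun n => al (rho n) * al (rho n) + ga (rho n) * ga (rho n)) (al rs * al rs + ga rs * ga rs)).
  { apply is_lim_seq_plus'; apply is_lim_seq_mult'; auto. }
  set (xst := (al rs * L1 + ga rs * L2) / (al rs * al rs + ga rs * ga rs)).
  set (yst := (ga rs * L1 - al rs * L2) / (al rs * al rs + ga rs * ga rs)).
  assert (Lx : is_lim_seq xs xst).
  { apply is_lim_seq_ext with (fun n => (al (rho n) * f1 b1 b2 (Re (u n)) (Im (u n)) + ga (rho n) * f2 b1 b2 (Re (u n)) (Im (u n)))
                                        / (al (rho n) * al (rho n) + ga (rho n) * ga (rho n))).
    - intros n. specialize (Dnz (rho n) (Hrho n)). specialize (Hrho n). unfold al, ga, rho, xs, ys, f1, f2 in *.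
      field. split; [lra|]. apply dnz_aux; auto.
    - apply is_lim_seq_div'; [|auto|apply Dnz; auto].
      apply is_lim_seq_plus'; apply is_lim_seq_mult'; auto. }
  assert (Ly : is_lim_seq ys yst).
  { apply is_lim_seq_ext with (fun n => (ga (rho n) * f1 b1 b2 (Re (u n)) (Im (u n)) - al (rho n) * f2 b1 b2 (Re (u n)) (Im (u n)))
                                        / (al (rho n) * al (rho n) + ga (rho n) * ga (rho n))).
    - intros n. specialize (Dnz (rho n) (Hrho n)). specialize (Hrho n). unfold al, ga, rho, xs, ys, f1, f2 in *.
      field. split; [lra|]. apply dnz_aux; auto.
    - apply is_lim_seq_div'; [|auto|apply Dnz; auto].
      apply (is_lim_seq_minus' (fun n => ga (rho n) * f1 b1 b2 (Re (u n)) (Im (u n))) (fun n => al (rho n) * f2 b1 b2 (Re (u n)) (Im (u n))));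
      apply is_lim_seq_mult'; auto. }
  assert (Ers : xst * xst + yst * yst = rs).
  { apply (lim_uniq rho). apply is_lim_seq_plus'; apply is_lim_seq_mult'; auto. auto. }
  set (p := (xst, yst) : C).
  assert (Hp : 0 < Cmod p).
  { unfold p. rewrite Cmod_pair. apply sqrt_lt_R0. lra. }
  exists p. split. { split; simpl; auto. }
  intros eps He.
  set (ρ := Cmod p / 2).
  assert (Hρ : 0 < ρ) by (unfold ρ; lra).
  set (K := 3 * (1 + Cmod b / (ρ * ρ) + / ρ)).
  assert (HK : 0 < K).
  { assert (0 <= Cmod b / (ρ * ρ)) by (apply Rdiv_le_0_compat; [apply Cmod_ge_0|nra]).
    assert (0 < / ρ) by (apply Rinv_0_lt_compat; lra). unfold K; lra. }
  set (δ := Rmin (ρ / 2) (eps / (4 * K))).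
  assert (Hδ : 0 < δ) by (apply Rmin_pos; [lra| apply Rdiv_lt_0_compat; lra]).
  assert (Hδ1 : δ <= ρ / 2) by apply Rmin_l.
  assert (Hδ2 : δ <= eps / (4 * K)) by apply Rmin_r.
  destruct (lim_pair xs ys xst yst δ Lx Ly Hδ) as [N HN].
  exists N. intros n Hn. destruct (HN n Hn) as [Ax Ay]. unfold xs, ys in Ax, Ay.
  eapply Rbar_le_lt_trans.
  - apply (dist_seg b 0 p_infty X1 X2 X3 (u n) p ρ H0 Hρ HX).
    intros t Ht.
    set (dx := xst - Re (u n)). set (dy := yst - Im (u n)).
    set (w := ((1-t)*dx, (1-t)*dy) : C).
    assert (Ez : p = (seg (u n) p t + w)%C).
    { unfold seg, p, w, dx, dy, Cplus; simpl. f_equal; ring. }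
    assert (Hw : Cmod w <= Rabs dx + Rabs dy).
    { unfold w. eapply Rle_trans. apply Cmod_pair_le. rewrite !Rabs_mult.
      assert (Rabs (1 - t) <= 1) by (rewrite Rabs_pos_eq; lra).
      pose proof (Rabs_pos dx); pose proof (Rabs_pos dy); pose proof (Rabs_pos (1-t)). nra. }
    assert (Hdx : Rabs dx < δ) by (unfold dx; rewrite Rabs_minus_sym; auto).
    assert (Hdy : Rabs dy < δ) by (unfold dy; rewrite Rabs_minus_sym; auto).
    pose proof (Cmod_triangle (seg (u n) p t) w) as Tr. rewrite <- Ez in Tr.
    assert (Cmod p = 2 * ρ) by (unfold ρ; field).
    assert (ρ <= Cmod (seg (u n) p t)) by lra.
    split; [split; simpl; auto; lra|auto].
  - simpl. fold K. unfold p; simpl.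
    rewrite (Rabs_minus_sym xst), (Rabs_minus_sym yst).
    assert (K * (Rabs (Re (u n) - xst) + Rabs (Im (u n) - yst)) <= K * (2 * δ)).
    { apply Rmult_le_compat_l; lra. }
    assert (K * (2 * δ) <= eps / 2).
    { replace (eps / 2) with (K * (2 * (eps / (4 * K)))) by (field; lra). apply Rmult_le_compat_l; lra. }
    lra.
Qed.


Lemma lim_inv_n (d : R) : is_lim_seq (fun n => d / (INR n + 1)) 0.
Proof.
  replace 0 with (d * 0) by ring. unfold Rdiv.
  apply (is_lim_seq_mult' (fun _ => d)). apply is_lim_seq_const.
  assert (H : is_lim_seq (fun n => / (INR n + 1)) (Rbar_inv p_infty)).
  { apply is_lim_seq_inv. apply is_lim_seq_ext with (fun n => INR (S n)). intros n; rewrite S_INR; ring.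
    apply -> (is_lim_seq_incr_1 INR). apply is_lim_seq_INR. discriminate. }
  exact H.
Qed.

Lemma frac_bounds (d : R) (n : nat) : 0 < d -> 0 < d / (INR n + 1) <= d.
Proof.
  intros Hd. pose proof (pos_INR n). split. apply Rdiv_lt_0_compat; lra.
  unfold Rdiv. rewrite <- (Rmult_1_r d) at 2. apply Rmult_le_compat_l. lra.
  rewrite <- Rinv_1. apply Rinv_le_contravar; lra.
Qed.

Theorem proposition3p3 (b : C) (r1 : R) (r2 : Rbar) (X1 X2 X3 : C -> R) :
  0 <= r1 -> Rbar_lt (Finite r1) r2 ->
  is_Re_primitive r1 r2 b X1 X2 X3 ->
  (complete_immersion r1 r2 X1 X2 X3 <->
   (r1 = 0 /\ r2 = p_infty /\ ~ (Im b = 0 /\ Re b < 0))).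
Proof.
  intros Hr1 Hr12 HX. split.
  - intros [Himm Hcomp].
    assert (E1 : r1 = 0).
    { destruct (Req_dec r1 0) as [|Hne]; auto. exfalso.
      assert (Hc : exists c, r1 < c /\ Rbar_lt c r2).
      { destruct r2 as [r2| |]; simpl in Hr12.
        exists ((r1+r2)/2); simpl; split; lra. exists (r1+1); simpl; split; auto; lra. contradiction. }
      destruct Hc as (c & Hc1 & Hc2).
      apply (incompl b r1 r2 X1 X2 X3 (fun n => r1 + (c - r1) / (INR n + 1)) r1 r1 Hr1); auto; try lra.
      + intros n. pose proof (frac_bounds (c - r1) n). assert (0 < c - r1) by lra.
        specialize (H H0). split; [lra|split; [|lra]].
        destruct r2; simpl in *; auto; lra.
      + pose proof (is_lim_seq_plus' (fun _ => r1) _ r1 0 (is_lim_seq_const r1) (lim_inv_n (c - r1))) as HH.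
        rewrite Rplus_0_r in HH. exact HH.
      + intros p [Hp _]. lra. }
    assert (E2 : r2 = p_infty).
    { destruct r2 as [r2| |]; auto; simpl in Hr12; [exfalso|contradiction].
      set (c := (r1 + r2)/2).
      apply (incompl b r1 r2 X1 X2 X3 (fun n => r2 - (r2 - c) / (INR n + 1)) c r2 Hr1); auto; try (unfold c; lra).
      + intros n. pose proof (frac_bounds (r2 - c) n). assert (0 < r2 - c) by (unfold c; lra).
        specialize (H H0). simpl. unfold c in *. split; [lra|split; lra].
      + pose proof (is_lim_seq_minus' (fun _ => r2) _ r2 0 (is_lim_seq_const r2) (lim_inv_n (r2 - c))) as HH.
        rewrite Rminus_0_r in HH. exact HH.
      + intros p [_ Hp]. simpl in Hp. lra. }
    subst. split; auto. split; auto.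
    intros [Hi Hre].
    set (s := sqrt (- Re b)).
    assert (Hs : 0 < s) by (apply sqrt_lt_R0; lra).
    assert (Hss : Re b = - (s * s)) by (unfold s; rewrite sqrt_sqrt; lra).
    assert (Hp : annulus 0 p_infty (0, s)).
    { split; simpl; auto. rewrite Cmod_pair. replace (0*0+s*s) with (s*s) by ring. rewrite sqrt_square; lra. }
    unfold is_immersion in Himm. apply (Himm ((0, s) : C) (- s) Hp).
    + lra.
    + rewrite (dX_eq b 0 p_infty X1 X2 X3 (0,s) (RtoC (- s)) Hr1 HX Hp). simpl. rewrite Hi.
      unfold P1, P2, P3, W1, W2. rewrite Hss. f_equal; [f_equal|]; field; lra.
  - intros (-> & -> & Hb). split.
    + intros p v Hp Hv E.
      rewrite (dX_eq b 0 p_infty X1 X2 X3 p (RtoC v) Hr1 HX Hp) in E.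
      injection E. intros A3 A2 A1.
      apply Hb. apply (imm_pos (Re b) (Im b) (Re p) (Im p) (Re v) (Im v)); auto.
      * apply (annulus_pos 0 p_infty); auto.
      * simpl. nra.
    + apply (compl b); auto.
Qed.
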